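(* Let $n\ge4$ and let $\mathcal{U}\subseteq\mathbb{P}_2(n)$ be an equidistant linear code with constant distance $2$. If $|\mathcal{U}|=2^{n-1}$, then either $\mathcal{U}^{*}$ is a sunflower, or $n=4$ and $\mathcal{U}^{*}=\{Y\in\mathbb{G}_2(4,2): Y\subset T\}$ for some $T\in\mathbb{G}_2(4,3)$.
   Context: $\mathbb{P}_q(n)$ denotes the set of all subspaces of $\mathbb{F}_q^n$ and $\mathbb{G}_q(n,k)$ the set of $k$-dimensional subspaces. For subspaces $X,Y$ the subspace distance is $d_S(X,Y)=\dim X+\dim Y-2\dim(X\cap Y)$. A linear code in $\mathbb{P}_q(n)$ is a subset $\mathcal{U}\subseteq\mathbb{P}_q(n)$ with $\{0\}\in\mathcal{U}$ for which there exists a map $\boxplus:\mathcal{U}\times\mathcal{U}\to\mathcal{U}$ such that (i) $(\mathcal{U},\boxplus)$ is an abelian group; (ii) its identity element is $\{0\}$; (iii) $X\boxplus X=\{0\}$ for all $X\in\mathcal{U}$; (iv) $d_S(Y_1\boxplus X,Y_2\boxplus X)=d_S(Y_1,Y_2)$ for all $Y_1,Y_2,X\in\mathcal{U}$. Its nontrivial part is $\mathcal{U}^*=\mathcal{U}\setminus\{\{0\}\}$. It is equidistant with constant distance $r$ if $d_S(X,Y)=r$ for all distinct $X,Y\in\mathcal{U}$. A family $\mathbb{S}\subseteq\mathbb{G}_q(n,k)$ is a sunflower (with center $C\in\mathbb{G}_q(n,t)$) if $X\cap Y=C$ for all distinct $X,Y\in\mathbb{S}$. *)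

(* Defs.v *)
(* Subspaces of F_q^n are {vspace 'rV['F_q]_n}. *)
From HB Require Import structures.
From mathcomp Require Import all_boot all_order all_algebra all_field.
Set Implicit Arguments. Unset Strict Implicit. Unset Printing Implicit Defensive.
Import GRing.Theory.
Local Open Scope ring_scope.

Section Defs.
Variables (F : fieldType) (vT : vectType F).

Definition dS (X Y : {vspace vT}) : nat :=
  (\dim X + \dim Y - 2 * \dim (X :&: Y))%N.

Definition linear_code (U : seq {vspace vT}) : Prop :=
  uniq U /\ (0%VS \in U) /\
  exists op : {vspace vT} -> {vspace vT} -> {vspace vT},
    (forall X Y, X \in U -> Y \in U -> op X Y \in U) /\
    [/\
        (forall X Y Z, X \in U -> Y \in U -> Z \in U ->
           op X (op Y Z) = op (op X Y) Z),
        (forall X Y, X \in U -> Y \in U -> op X Y = op Y X),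
        (forall X, X \in U -> op 0%VS X = X /\ op X 0%VS = X),
        (forall X, X \in U -> op X X = 0%VS) &
        (forall Y1 Y2 X, Y1 \in U -> Y2 \in U -> X \in U ->
           dS (op Y1 X) (op Y2 X) = dS Y1 Y2)].

Definition nontriv (U : seq {vspace vT}) : seq {vspace vT} :=
  [seq X <- U | X != 0%VS].

Definition equidistant (U : seq {vspace vT}) (r : nat) : Prop :=
  forall X Y, X \in U -> Y \in U -> X != Y -> dS X Y = r.

Definition sunflower (S : seq {vspace vT}) : Prop :=
  exists (k t : nat) (C : {vspace vT}),
    [/\ \dim C = t,
        (forall X, X \in S -> \dim X = k) &
        (forall X Y, X \in S -> Y \in S -> X != Y -> (X :&: Y)%VS = C)].

End Defs.

(* Main.v *)
Require Import Defs.
From HB Require Import structures.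
From mathcomp Require Import all_boot all_order all_algebra all_field.
From mathcomp Require Import zify.
From Stdlib Require Import Classical.
Import GRing.Theory.


Section Geo.
Variables (F : fieldType) (vT : vectType F).
Implicit Types (X Y Z L P W : {vspace vT}).

Lemma eq_dim_sub X Y : (X <= Y)%VS -> \dim Y <= \dim X -> X = Y.
Proof. by move=> s d; apply/eqP; rewrite eqEdim s. Qed.

Lemma lines_neq (L1 L2 : {vspace vT}) : \dim L1 = 1%N -> \dim L2 = 1%N -> L1 != L2 ->
  \dim (L1 + L2) = 2%N.
Proof.
move=> d1 d2 ne.
have := dimv_sum_cap L1 L2; rewrite d1 d2.
have : \dim (L1 :&: L2) <= 1 by rewrite -d1 dimvS ?capvSl.
rewrite leq_eqVlt ltnS leqn0 => /orP[/eqP h|/eqP -> ]; last by rewrite addn0.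
have e1 : (L1 :&: L2)%VS = L1 by apply: eq_dim_sub; rewrite ?capvSl ?d1 ?h.
have e2 : (L1 :&: L2)%VS = L2 by apply: eq_dim_sub; rewrite ?capvSr ?d2 ?h.
by move: ne; rewrite -e1 -{2}e2 eqxx.
Qed.

Lemma plane_sub P (L1 L2 : {vspace vT}) W : \dim P = 2%N -> \dim L1 = 1%N -> \dim L2 = 1%N ->
  L1 != L2 -> (L1 <= P)%VS -> (L2 <= P)%VS -> (L1 <= W)%VS -> (L2 <= W)%VS ->
  (P <= W)%VS.
Proof.
move=> dP d1 d2 ne s1 s2 w1 w2.
have -> : P = (L1 + L2)%VS.
  symmetry; apply: eq_dim_sub; first by rewrite subv_add s1 s2.
  by rewrite dP lines_neq.
by rewrite subv_add w1 w2.
Qed.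

Lemma line_eq (L1 L2 : {vspace vT}) : \dim L1 = 1%N -> \dim L2 = 1%N -> (L1 <= L2)%VS -> L1 = L2.
Proof. by move=> d1 d2 s; apply: eq_dim_sub; rewrite ?d1 ?d2. Qed.

Lemma dim_add_line Y x : x \notin Y -> \dim (Y + <[x]>%VS) = (\dim Y).+1.
Proof.
move=> nx; have x0 : x != 0%R by apply: contraNneq nx => ->; rewrite mem0v.
have := dimv_sum_cap Y <[x]>; rewrite dim_vline x0.
have : \dim (Y :&: <[x]>%VS) <= 1 by have := dimvS (capvSr Y <[x]>%VS); rewrite dim_vline x0.
rewrite leq_eqVlt ltnS leqn0 => /orP[/eqP h|/eqP -> ]; last by rewrite addn0 addn1.
have e : (Y :&: <[x]>%VS)%VS = <[x]>%VS by apply: eq_dim_sub; rewrite ?capvSr ?dim_vline ?x0 ?h.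
by move: nx; rewrite memvE -e capvSl.
Qed.
End Geo.

Lemma F2cases (k : 'F_2) : k = 0%R \/ k = 1%R.
Proof. case: k => [[|[|//]]] ? /=; [left|right]; exact: val_inj. Qed.

Section F2.
Variable (vT : vectType 'F_2).
Implicit Types (T Y : {vspace vT}).

Lemma addvv (x : vT) : (x + x = 0)%R.
Proof. by rewrite -{1 2}(scale1r x) -scalerDl (_ : 1 + 1 = 0)%R ?scale0r //; apply: val_inj. Qed.

Lemma F2scale (k : 'F_2) (x : vT) : (k *: x = 0 \/ k *: x = x)%R.
Proof. by case: (F2cases k) => ->; [left; rewrite scale0r | right; rewrite scale1r]. Qed.

Lemma add_mem T Y (x y : vT) : \dim T = 3 -> (Y <= T)%VS -> \dim Y = 2 ->
  x \in T -> y \in T -> (x + y \in Y)%R = ((x \in Y) == (y \in Y)).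
Proof.
move=> dT YT dY xT yT.
case: (boolP (x \in Y)) => xY; case: (boolP (y \in Y)) => yY /=.
- by rewrite memvD.
- apply: contraNF yY => h; by rewrite -(addKr x y) memvD // memvN.
- apply: contraNF xY => h; by rewrite -(addrK y x) memvB.
have e : (Y + <[x]>)%VS = T.
  apply: eq_dim_sub; first by rewrite subv_add YT -memvE.
  by rewrite dim_add_line // dT dY.
move: yT; rewrite -e => /memv_addP[u uY [v /vlineP[k ->] yE]]; subst y.
case: (F2scale k x) => e0; rewrite e0 in yY *.
  by move: yY; rewrite addr0 uY.
by rewrite addrC -addrA addvv addr0.
Qed.

Lemma span_ind T (Pr : vT -> bool) : Pr 0%R ->
  (forall x y, x \in T -> y \in T -> Pr x -> Pr y -> Pr (x + y)%R) ->
  (forall (i : nat) (c : 'F_2), (i < \dim T)%N -> Pr (c *: (vbasis T)`_i)%R) ->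
  forall v, v \in T -> Pr v.
Proof.
move=> P0 PD PZ v vT'; rewrite (coord_vbasis vT').
suff /andP[] : (\sum_(i < \dim T) coord (vbasis T) i v *: (vbasis T)`_i \in T)%R &&
  Pr (\sum_(i < \dim T) coord (vbasis T) i v *: (vbasis T)`_i)%R by [].
apply: (big_ind (fun w => (w \in T) && Pr w)).
- by rewrite mem0v P0.
- by move=> x y /andP[xT Px] /andP[yT Py]; rewrite memvD // PD.
move=> i _; rewrite PZ ?ltn_ord // andbT memvZ // vbasis_mem // mem_nth // size_tuple // ltn_ord.
Qed.

Lemma key_inj T Y1 Y2 : \dim T = 3 -> (Y1 <= T)%VS -> (Y2 <= T)%VS ->
  \dim Y1 = 2 -> \dim Y2 = 2 ->
  (forall i, (i < 3)%N -> (((vbasis T)`_i)%R \in Y1) = (((vbasis T)`_i)%R \in Y2)) ->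
  Y1 = Y2.
Proof.
move=> dT s1 s2 d1 d2 h.
have H : forall v, v \in T -> (v \in Y1) == (v \in Y2).
  apply: span_ind.
  - by rewrite !mem0v.
  - move=> x y xT yT /eqP e1 /eqP e2.
    by rewrite (add_mem _ _ _ _ dT s1 d1 xT yT) (add_mem _ _ _ _ dT s2 d2 xT yT) e1 e2.
  move=> i c iT; have hi := h i (eq_ind _ (fun m => (i < m)%N) iT _ dT).
  by case: (F2scale c ((vbasis T)`_i)%R) => ->; rewrite ?mem0v // hi.
apply: subv_anti; apply/andP; split; apply/subvP => v vY.
  by rewrite -(eqP (H v _)) // (subvP s1).
by rewrite (eqP (H v _)) // (subvP s2).
Qed.

Lemma key_not_all T Y : \dim T = 3 -> \dim Y = 2 ->
  ~ (forall i, (i < 3)%N -> ((vbasis T)`_i)%R \in Y).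
Proof.
move=> dT dY h.
have : (T <= Y)%VS.
  apply/subvP; apply: span_ind; first exact: mem0v.
  - by move=> x y _ _; apply: memvD.
  move=> i c iT; have hi := h i (eq_ind _ (fun m => (i < m)%N) iT _ dT); by rewrite memvZ.
by move/dimvS; rewrite dT dY.
Qed.
End F2.

Lemma pow_ge n : (4 <= n)%N -> (8 <= 2 ^ n.-1)%N.
Proof.
move=> h; have [m ->] : exists m, n = (m + 4)%N by exists (n - 4)%N; lia.
rewrite addn4 /= (_ : m.+3 = m + 3)%N ?expnD; last lia.
by rewrite (_ : 2 ^ 3 = 8)%N // leq_pmull // expn_gt0.
Qed.

Lemma pow_le n : (4 <= n)%N -> (2 ^ n.-1 <= 8)%N -> n = 4%N.
Proof.
move=> h; have [m ->] : exists m, n = (m + 4)%N by exists (n - 4)%N; lia.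
rewrite addn4 /= (_ : m.+3 = m + 3)%N ?expnD; last lia.
rewrite (_ : 2 ^ 3 = 8)%N // => h2.
have : (2 ^ m <= 1)%N by rewrite -(leq_pmul2r (_ : 0 < 8)%N) // mul1n.
case: m {h h2} => // m; rewrite expnS.
by have := expn_gt0 2 m; lia.
Qed.

Lemma two_distinct (T : eqType) (s : seq T) : uniq s -> (2 <= size s)%N ->
  exists A B, [/\ A \in s, B \in s & A != B].
Proof.
case: s => [|A [|B r]] //= /andP[nA _] _; exists A, B.
split; rewrite ?inE ?eqxx ?orbT //.
by apply: contraNneq nA => ->; rewrite inE eqxx.
Qed.

Lemma card7 : #|predC1 (true, true, true)| = 7%N.
Proof. by rewrite cardC1 !card_prod card_bool. Qed.

Section Key.
Variable (vT : vectType 'F_2).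
Definition key (T Y : {vspace vT}) : bool * bool * bool :=
  ((((vbasis T)`_0)%R \in Y), (((vbasis T)`_1)%R \in Y), (((vbasis T)`_2)%R \in Y)).


Lemma key_eq T X Y : key T X = key T Y ->
  forall i, (i < 3)%N -> (((vbasis T)`_i)%R \in X) = (((vbasis T)`_i)%R \in Y).
Proof. by case=> e0 e1 e2 [|[|[|i]]]. Qed.

Lemma key_ne T Y : \dim T = 3%N -> \dim Y = 2%N -> key T Y != (true, true, true).
Proof.
move=> dT dY; apply/negP => /eqP[e0 e1 e2].
by apply: (@key_not_all _ _ _ dT dY) => [[|[|[|i]]]].
Qed.
End Key.
Arguments key {vT}.

Theorem proposition2 (n : nat) (U : seq {vspace 'rV['F_2]_n}) :
  (4 <= n)%N ->
  linear_code U ->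
  equidistant U 2 ->
  size U = (2 ^ n.-1)%N ->
  sunflower (nontriv U) \/
  (n = 4%N /\
   exists T : {vspace 'rV['F_2]_n},
     \dim T = 3%N /\
     forall Y : {vspace 'rV['F_2]_n},
       Y \in nontriv U <-> (\dim Y = 2%N /\ (Y <= T)%VS)).
Proof.
move=> n4 [uU [U0 _]] eqd sU.
set S := nontriv U.
have memS X : X \in S = (X != 0%VS) && (X \in U) by rewrite mem_filter.
have uS : uniq S by exact: filter_uniq.
have dimS X : X \in S -> \dim X = 2%N.
  rewrite memS => /andP[X0 XU].
  have := eqd _ _ U0 XU; rewrite eq_sym => /(_ X0).
  by rewrite /dS cap0v dimv0 add0n muln0 subn0.
have capS X Y : X \in S -> Y \in S -> X != Y -> \dim (X :&: Y) = 1%N.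
  move=> XS YS XY; have := dimS _ XS; have := dimS _ YS.
  move: (XS) (YS); rewrite !memS => /andP[_ XU] /andP[_ YU].
  have := eqd _ _ XU YU XY; rewrite /dS => h d1 d2; move: h; rewrite d1 d2; lia.
have sizeS : (size S).+1 = (2 ^ n.-1)%N.
  rewrite -sU -(count_predC (pred1 0%VS) U) count_uniq_mem // U0 add1n.
  by rewrite /S /nontriv size_filter.
have S7 : (7 <= size S)%N by have := @pow_ge n n4; lia.
have [A [B [AS BS AB]]] := @two_distinct _ S uS (leq_trans (isT : (2 <= 7)%N) S7).
have lineI X Y L : X \in S -> Y \in S -> X != Y -> \dim L = 1%N ->
    (L <= X)%VS -> (L <= Y)%VS -> L = (X :&: Y)%VS.
  move=> XS YS XY dL LX LY; apply: line_eq => //; first exact: capS.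
  by rewrite subv_cap LX LY.
case: (classic (exists A B C, [/\ A \in S, B \in S, C \in S, A != B &
          [/\ A != C, B != C & (A :&: B)%VS != (A :&: C)%VS]])); last first.
  move=> H; left; exists 2%N, 1%N, (A :&: B)%VS; split; first exact: capS.
    exact: dimS.
  have HA Z : Z \in S -> Z != A -> (A :&: Z)%VS = (A :&: B)%VS.
    move=> ZS ZA; case: (eqVneq Z B) => [-> // | ZB].
    apply/eqP; apply: contraT => ne; case: H; exists A, B, Z.
    by split => //; split => //; rewrite 1?eq_sym // eq_sym.
  move=> X Y XS YS XY.
  case: (eqVneq X A) => [eXA | XA].
    by rewrite eXA; apply: HA => //; rewrite eq_sym -eXA.
  case: (eqVneq Y A) => [-> | YA]; first by rewrite capvC; apply: HA.
  rewrite -(HA X XS XA) capvC; apply/eqP; apply: contraT => ne.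
  case: H; exists X, A, Y; split => //; split => //; first by rewrite eq_sym.
  by rewrite eq_sym [(X :&: Y)%VS]capvC [(X :&: A)%VS]capvC.

move=> [A' [B' [C [AS' BS' CS AB' [AC BC ne]]]]]; clear A B AS BS AB.
rename A' into A; rename B' into B; rename AS' into AS; rename BS' into BS; rename AB' into AB.
set T := (A + B)%VS.
have dT : \dim T = 3%N.
  rewrite /T; have := dimv_sum_cap A B; rewrite (dimS _ AS) (dimS _ BS) (capS _ _ AS BS AB); lia.
have AT : (A <= T)%VS by exact: addvSl.
have BT : (B <= T)%VS by exact: addvSr.
have CT : (C <= T)%VS.
  apply: (@plane_sub _ _ C (C :&: A)%VS (C :&: B)%VS).
  - exact: dimS.
  - by apply: capS => //; rewrite eq_sym.
  - by apply: capS => //; rewrite eq_sym.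
  - apply: contra ne => /eqP e.
    have e1 : (C :&: A)%VS = (A :&: B)%VS.
      apply: lineI => //; first by apply: capS => //; rewrite eq_sym.
        exact: capvSr.
      by rewrite e capvSr.
    by rewrite -e1 capvC.
  - exact: capvSl.
  - exact: capvSl.
  - exact: subv_trans (capvSr _ _) AT.
  - exact: subv_trans (capvSr _ _) BT.
have ZT Z : Z \in S -> (Z <= T)%VS.
  move=> ZS.
  case: (eqVneq Z A) => [-> // | ZA]; case: (eqVneq Z B) => [-> // | ZB].
  case: (eqVneq Z C) => [-> // | ZC].
  have lA : \dim (Z :&: A) = 1%N by exact: capS.
  have lB : \dim (Z :&: B) = 1%N by exact: capS.
  have lC : \dim (Z :&: C) = 1%N by exact: capS.
  case: (eqVneq (Z :&: A)%VS (Z :&: B)%VS) => [eAB | nAB]; last first.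
    apply: (@plane_sub _ _ Z (Z :&: A)%VS (Z :&: B)%VS) => //; rewrite ?capvSl //.
      exact: dimS.
    exact: subv_trans (capvSr _ _) AT.
    exact: subv_trans (capvSr _ _) BT.
  have nAC : (Z :&: A)%VS != (Z :&: C)%VS.
    apply: contra ne => /eqP eAC.
    have e1 : (Z :&: A)%VS = (A :&: B)%VS.
      by apply: lineI => //; rewrite ?capvSr // eAB capvSr.
    have e2 : (Z :&: A)%VS = (A :&: C)%VS.
      by apply: lineI => //; rewrite ?capvSr // eAC capvSr.
    by rewrite -e1 -e2.
  apply: (@plane_sub _ _ Z (Z :&: A)%VS (Z :&: C)%VS) => //; rewrite ?capvSl //.
    exact: dimS.
  exact: subv_trans (capvSr _ _) AT.
  exact: subv_trans (capvSr _ _) CT.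
have kinj : {in S &, injective (key T)}.
  move=> X Y XS YS e; apply: (@key_inj _ T) => //; rewrite ?ZT ?dimS //.
  exact: key_eq.
set s := map (key T) S.
have us : uniq s by rewrite map_inj_in_uniq.
have ssub : {subset s <= enum (predC1 (true, true, true))}.
  by move=> k /mapP[Y YS ->]; rewrite mem_enum inE key_ne // dimS.
have senum : size (enum (predC1 (true, true, true))) = 7%N by rewrite -cardE card7.
have le7 : (size S <= 7)%N.
  by have := uniq_leq_size us ssub; rewrite size_map senum.
have n4' : n = 4%N by apply: pow_le => //; rewrite -sizeS ltnS.
right; split => //; exists T; split => // Y; split.
  by move=> YS; rewrite dimS // ZT.
move=> [dY YT].
have := uniq_min_size us ssub; rewrite size_map senum => /(_ S7) [_ eqs].
have : key T Y \in s by rewrite eqs mem_enum inE key_ne.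
case/mapP=> Z ZS e.
have -> : Y = Z; last by [].
apply: (@key_inj _ T) => //; [exact: ZT | exact: dimS | exact: key_eq].
Qed.
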